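(* Let $\sigma$ be any position of the parallel chip-firing game on $K_{a,b}$ ($a,b\ge1$). If $p(\sigma)$ is odd then $p(\sigma)\le\min(a,b)$, and if $p(\sigma)$ is even then $p(\sigma)\le 2\min(a,b)$.
   Context: Parallel chip-firing game: a position $\sigma$ assigns a nonnegative integer to each vertex; in each step every vertex $v$ with $\sigma(v)\ge\deg(v)$ simultaneously sends one chip to each neighbor. $K_{a,b}$ is the complete bipartite graph with sides of sizes $a$ and $b$. The period $p(\sigma)$ is the least positive integer $p$ such that $U^{t+p}\sigma=U^t\sigma$ for all sufficiently large $t$, where $U$ is the step operator. *)

(* Defs.v *)
From mathcomp Require Import all_boot.
Set Implicit Arguments. Unset Strict Implicit. Unset Printing Implicit Defensive.

Definition Kvert (a b : nat) : finType := ('I_a + 'I_b)%type.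

Definition Kadj (a b : nat) (u v : Kvert a b) : bool :=
  match u, v with
  | inl _, inr _ => true
  | inr _, inl _ => true
  | _, _ => false
  end.

Definition Kdeg (a b : nat) (v : Kvert a b) : nat :=
  #|[pred u | Kadj v u]|.

Definition position (a b : nat) := Kvert a b -> nat.

Definition fires (a b : nat) (s : position a b) (v : Kvert a b) : bool :=
  Kdeg v <= s v.

Definition step (a b : nat) (s : position a b) : position a b :=
  fun v => s v - (if fires s v then Kdeg v else 0)
           + #|[pred u | Kadj u v && fires s u]|.

Definition Uiter (a b : nat) (t : nat) (s : position a b) : position a b :=
  iter t (@step a b) s.

Definition is_eventual_period (a b : nat) (s : position a b) (p : nat) : Prop :=
  0 < p /\ exists T, forall t, T <= t -> Uiter (t + p) s = Uiter t s.

Definition period_of (a b : nat) (s : position a b) (p : nat) : Prop :=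
  is_eventual_period s p /\ forall q, is_eventual_period s q -> p <= q.

(* Main.v *)
Require Import Defs.
From mathcomp Require Import all_boot.
From Stdlib Require Import Lia FunctionalExtensionality.
Set Implicit Arguments. Unset Strict Implicit. Unset Printing Implicit Defensive.

Ltac ssrlia := repeat match goal with
 | H : is_true (_ <= _) |- _ => move/leP: H => H
 | H : is_true (_ == _) |- _ => move/eqP: H => H
 | H : is_true (~~ (_ <= _)) |- _ => move/negP/leP: H => H
 end;
 try (match goal with |- is_true (_ <= _) => apply/leP end);
 try (match goal with |- is_true (_ == _) => apply/eqP end);
 repeat match goal with H : context [addn] |- _ => rewrite -plusE in H
 | H : context [muln] |- _ => rewrite -multE in H
 | H : context [subn] |- _ => rewrite -minusE in H end;
 rewrite -?plusE -?multE -?minusE; lia.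

Lemma h_trans (n : nat) (h : nat -> nat) (htr : forall x, h (x + n) = h x + n) k x :
  h (x + k * n) = h x + k * n.
Proof.
elim: k x => [|k IH] x; first by rewrite !mul0n !addn0.
by rewrite mulSn addnA IH htr; ssrlia.
Qed.

Lemma iter_trans (n : nat) (h : nat -> nat) (htr : forall x, h (x + n) = h x + n) r k x :
  iter r h (x + k * n) = iter r h x + k * n.
Proof. elim: r => [|r IH] //=; by rewrite IH (h_trans htr). Qed.

Lemma iter_mono (h : nat -> nat) (hm : forall x y, x <= y -> h x <= h y) r x y :
  x <= y -> iter r h x <= iter r h y.
Proof. move=> le; elim: r => [|r IH] //=; exact: hm. Qed.

Lemma iter_comm (T : Type) (h : T -> T) r k x : iter r h (iter k h x) = iter k h (iter r h x).
Proof. by rewrite -!iterD addnC. Qed.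

Lemma pigeon n (f : nat -> nat) : (forall i, i <= n -> f i < n) ->
  exists i j, i < j <= n /\ f i = f j.
Proof.
move=> hf.
have : ~~ uniq [seq f i | i <- iota 0 n.+1].
  apply/negP => U.
  have sub : {subset [seq f i | i <- iota 0 n.+1] <= iota 0 n}.
    move=> y /mapP [i]; rewrite mem_iota add0n => /andP [_ hi] ->.
    by rewrite mem_iota add0n hf.
  by have := uniq_leq_size U sub; rewrite size_map !size_iota ltnn.
case/(uniqPn 0) => i [j] [ij]; rewrite size_map size_iota => jn.
rewrite !(nth_map 0) ?size_iota //; last by apply: ltn_trans jn.
rewrite !nth_iota //; last by apply: ltn_trans jn.
rewrite !add0n => e. exists i, j; split => //. by rewrite ij.
Qed.

Lemma orbit_mono (h : nat -> nat) x0 (hinc : forall k, iter k h x0 <= iter k.+1 h x0) i j :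
  i <= j -> iter i h x0 <= iter j h x0.
Proof.
move=> ij; rewrite -(subnKC ij); elim: (j - i) => [|d IH]; first by rewrite addn0.
by rewrite addnS; apply: leq_trans IH (hinc _).
Qed.

Lemma ev_per n (h : nat -> nat) (hn : 0 < n) (htr : forall x, h (x + n) = h x + n)
  x0 (hinc : forall k, iter k h x0 <= iter k.+1 h x0) :
  exists i m J, 0 < m <= n /\ iter m h (iter i h x0) = iter i h x0 + J * n.
Proof.
have [i [j [/andP [ij jn] e]]] := pigeon (f := fun k => iter k h x0 %% n)
   (fun i _ => ltn_pmod _ hn).
have le := orbit_mono hinc (ltnW ij).
exists i, (j - i), ((iter j h x0 - iter i h x0) %/ n); split.
  by rewrite subn_gt0 ij /=; apply: leq_trans (leq_subr _ _) jn.
rewrite -iterD subnK ?(ltnW ij) // divnK; first by rewrite subnKC.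
by rewrite -eqn_mod_dvd // e.
Qed.

Lemma per_after (n : nat) (h : nat -> nat) (htr : forall x, h (x + n) = h x + n)
  x0 i m J : iter m h (iter i h x0) = iter i h x0 + J * n ->
  forall k, i <= k -> iter m h (iter k h x0) = iter k h x0 + J * n.
Proof.
move=> e k ik; rewrite -(subnK ik) iterD iter_comm e.
by rewrite (iter_trans htr).
Qed.

Lemma per_mult (n : nat) (h : nat -> nat) (htr : forall x, h (x + n) = h x + n)
  z m J : iter m h z = z + J * n -> forall r, iter (r * m) h z = z + (r * J) * n.
Proof.
move=> e; elim=> [|r IH]; first by rewrite !mul0n addn0.
rewrite mulSn iterD IH (iter_trans htr) e; ssrlia.
Qed.

Lemma per_compare (n : nat) (h : nat -> nat) (hn : 0 < n)
  (hm : forall x y, x <= y -> h x <= h y) (htr : forall x, h (x + n) = h x + n)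
  z w m m' J J' : iter m h z = z + J * n -> iter m' h w = w + J' * n ->
  J * m' = J' * m.
Proof.
move=> ez ew.
set R := z + w + z * n + w * n + 1.
have Ez := per_mult htr ez (R * m').
have Ew := per_mult htr ew (R * m).
have EK : R * m' * m = R * m * m' by rewrite mulnAC.
have s1 : iter (R * m * m') h z <= iter (R * m * m') h w + z * n.
  rewrite -(iter_trans htr); apply: iter_mono => //.
  have HH := leq_pmulr z hn; ssrlia.
have s2 : iter (R * m * m') h w <= iter (R * m * m') h z + w * n.
  rewrite -(iter_trans htr); apply: iter_mono => //.
  have HH := leq_pmulr w hn; ssrlia.
rewrite -EK Ez in s1 s2; rewrite EK Ew in s1 s2.
apply/eqP; rewrite eqn_leq; apply/andP; split; apply/negP => /negP; rewrite -ltnNge => lt.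
- have := leq_mul (leq_mul (leqnn R) lt) (leqnn n).
  rewrite mulnS mulnDl !mulnA (mulnAC R J m') (mulnAC R J' m) => H.
  have HR : w + z * n < R by rewrite /R; ssrlia.
  have HR' : R <= R * n by rewrite leq_pmulr.
  ssrlia.
- have := leq_mul (leq_mul (leqnn R) lt) (leqnn n).
  rewrite mulnS mulnDl !mulnA (mulnAC R J m') (mulnAC R J' m) => H.
  have HR : z + w * n < R by rewrite /R; ssrlia.
  have HR' : R <= R * n by rewrite leq_pmulr.
  ssrlia.
Qed.

Lemma phi_up (n : nat) (phi : nat -> nat)
  (hm : forall x y, x <= y -> phi x <= phi y) (htr : forall x k, phi (x + k * n) = phi x + k * n)
  w J : w + J * n <= phi w -> forall i, phi w + i * (J * n) <= iter i.+1 phi w.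
Proof.
move=> le; elim=> [|i IH]; first by rewrite mul0n addn0.
rewrite iterS; apply: leq_trans (hm _ _ IH).
rewrite !mulnA htr; apply: leq_trans (leq_add (hm _ _ le) (leqnn _)).
rewrite htr mulSn; ssrlia.
Qed.

Lemma phi_down (n : nat) (phi : nat -> nat)
  (hm : forall x y, x <= y -> phi x <= phi y) (htr : forall x k, phi (x + k * n) = phi x + k * n)
  w J : phi w <= w + J * n -> forall i, iter i.+1 phi w <= phi w + i * (J * n).
Proof.
move=> le; elim=> [|i IH]; first by rewrite mul0n addn0.
rewrite iterS; apply: leq_trans (hm _ _ IH) _.
rewrite !mulnA htr; apply: leq_trans (leq_add (hm _ _ le) (leqnn _)) _.
rewrite htr mulSn; ssrlia.
Qed.

Lemma per_fixed (n : nat) (h : nat -> nat) (hn : 0 < n)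
  (hm : forall x y, x <= y -> h x <= h y) (htr : forall x, h (x + n) = h x + n)
  w m m' J J' : 0 < m' -> iter m' h w = w + J' * n -> J * m' = J' * m ->
  iter m h w = w + J * n.
Proof.
move=> m'0 ew eJ.
set phi := iter m h.
have phm : forall x y, x <= y -> phi x <= phi y by move=> x y; apply: iter_mono.
have pht : forall x k, phi (x + k * n) = phi x + k * n by move=> x k; apply: iter_trans.
have E : iter m' phi w = w + m' * J * n.
  rewrite /phi -iterM mulnC (per_mult htr ew m). congr (_ + _); by rewrite (mulnC m J') -eJ (mulnC J m').
case: m' m'0 ew eJ E => // m'' _ ew eJ E.
apply/eqP; rewrite eqn_leq; apply/andP; split; apply/negP => /negP; rewrite -ltnNge => lt.
- have := phi_up phm pht (ltnW lt) m''. rewrite E mulSn => H.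
  have : w + J * n + m'' * (J * n) < phi w + m'' * (J * n) by rewrite ltn_add2r.
  rewrite mulnA in H *; ssrlia.
- have := phi_down phm pht (ltnW lt) m''. rewrite E mulSn => H.
  have : phi w + m'' * (J * n) < w + J * n + m'' * (J * n) by rewrite ltn_add2r.
  rewrite mulnA in H *; ssrlia.
Qed.

Theorem circle (n : nat) (h : nat -> nat) (hn : 0 < n)
  (hm : forall x y, x <= y -> h x <= h y) (htr : forall x, h (x + n) = h x + n)
  x0 y0 (hx : forall k, iter k h x0 <= iter k.+1 h x0)
  (hy : forall k, iter k h y0 <= iter k.+1 h y0) :
  exists m J N, 0 < m <= n /\ forall k, N <= k ->
    iter m h (iter k h x0) = iter k h x0 + J * n /\
    iter m h (iter k h y0) = iter k h y0 + J * n.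
Proof.
have [i [m [J [/andP [m0 mn] ex]]]] := ev_per hn htr hx.
have [i' [m' [J' [/andP [m'0 _] ey]]]] := ev_per hn htr hy.
have eJ := per_compare hn hm htr ex ey.
have ey2 := per_fixed hn hm htr m'0 ey eJ.
exists m, J, (maxn i i'); rewrite m0 mn; split => // k; rewrite geq_max => /andP [ik i'k].
by split; [apply: (per_after htr ex) | apply: (per_after htr ey2)].
Qed.

Lemma h_trans2 (n n' : nat) (h : nat -> nat) (htr : forall x, h (x + n) = h x + n') k x :
  h (x + k * n) = h x + k * n'.
Proof.
elim: k x => [|k IH] x; first by rewrite !mul0n !addn0.
by rewrite !mulSn addnA IH htr; ssrlia.
Qed.

Lemma chains (a b : nat) (ha : 0 < a) (hb : 0 < b) (f g : nat -> nat)
  (fm : forall x y, x <= y -> f x <= f y) (gm : forall x y, x <= y -> g x <= g y)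
  (ftr : forall x, f (x + b) = f x + a) (gtr : forall y, g (y + a) = g y + b)
  (C D : nat -> nat) (eC : forall t, C t.+1 = g (D t)) (eD : forall t, D t.+1 = f (C t))
  (Cinc : forall t, C t <= C t.+1) :
  exists m J N, 0 < m <= b /\ forall t, N <= t ->
    C (t + 2 * m) = C t + J * b /\ D (t + 2 * m) = D t + J * a.
Proof.
set h := fun x => g (f x).
have hm : forall x y, x <= y -> h x <= h y by move=> x y le; apply/gm/fm.
have htr : forall x, h (x + b) = h x + b by move=> x; rewrite /h ftr gtr.
have E : forall r k, C (2 * k + r) = iter k h (C r).
  move=> r; elim=> [|k IH]; first by rewrite muln0.
  rewrite iterS -IH mulnS. by rewrite -addnA !addSn add0n eC eD.
have Cmono : forall i j, i <= j -> C i <= C j.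
  move=> i j ij; rewrite -(subnKC ij); elim: (j - i) => [|d IH]; first by rewrite addn0.
  by rewrite addnS; apply: leq_trans IH (Cinc _).
have hx : forall k, iter k h (C 0) <= iter k.+1 h (C 0).
  by move=> k; rewrite -!E; apply: Cmono; ssrlia.
have hy : forall k, iter k h (C 1) <= iter k.+1 h (C 1).
  by move=> k; rewrite -!E; apply: Cmono; ssrlia.
have [m [J [N0 [mb H]]]] := circle hb hm htr hx hy.
have HC : forall t, 2 * N0 <= t -> C (t + 2 * m) = C t + J * b.
  move=> t le; have et := odd_double_half t.
  rewrite -muln2 mulnC in et.
  have kN : N0 <= t./2 by move: le et; case: (odd t) => /= le et; ssrlia.
  rewrite -et; case: (odd t) => /=.
  - rewrite (_ : 1 + 2 * t./2 + 2 * m = 2 * (m + t./2) + 1); last ssrlia.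
    rewrite (_ : 1 + 2 * t./2 = 2 * t./2 + 1); last ssrlia.
    rewrite !E iterD; exact: (H _ kN).2.
  - rewrite (_ : 0 + 2 * t./2 + 2 * m = 2 * (m + t./2) + 0); last ssrlia.
    rewrite (_ : 0 + 2 * t./2 = 2 * t./2 + 0); last ssrlia.
    rewrite !E iterD; exact: (H _ kN).1.
exists m, J, (2 * N0).+1; split => // t le.
split; first by apply: HC; ssrlia.
case: t le => // t le.
by rewrite addSn !eD HC ?(h_trans2 ftr J) //; ssrlia.
Qed.

Lemma Kadj_sym a b (u v : Kvert a b) : Kadj u v = Kadj v u.
Proof. by case: u; case: v. Qed.

Definition inc a b (s : position a b) (v : Kvert a b) :=
  #|[pred u | Kadj u v && fires s u]|.

Lemma stepE a b (s : position a b) v :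
  step s v = s v - (if fires s v then Kdeg v else 0) + inc s v.
Proof. by []. Qed.

Lemma inc_le a b (s : position a b) v : inc s v <= Kdeg v.
Proof.
apply: subset_leq_card; apply/subsetP => u; rewrite !inE Kadj_sym.
by case/andP.
Qed.

Lemma inc_full a b (s : position a b) v : inc s v = Kdeg v ->
  forall u, Kadj v u -> fires s u.
Proof.
move=> e u vu.
have sub : [pred u | Kadj u v && fires s u] \subset [pred u | Kadj v u].
  by apply/subsetP => x; rewrite !inE Kadj_sym; case/andP.
have := (subset_cardP e sub) u; rewrite !inE vu Kadj_sym vu /=.
by move=> ->.
Qed.

Lemma inc_all a b (s : position a b) v : (forall u, Kadj v u -> fires s u) ->
  inc s v = Kdeg v.
Proof.
move=> H; apply: eq_card => u; rewrite !inE Kadj_sym.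
by case e: (Kadj v u) => //=; rewrite H.
Qed.

Lemma lt2_step a b (s : position a b) v : s v < 2 * Kdeg v -> step s v < 2 * Kdeg v.
Proof.
move=> lt; rewrite stepE /fires; have := inc_le s v.
case: (leqP (Kdeg v) (s v)) => h1 h2; ssrlia.
Qed.

Lemma lt2_stays a b (s : position a b) v t k :
  Uiter t s v < 2 * Kdeg v -> Uiter (k + t) s v < 2 * Kdeg v.
Proof. move=> h; elim: k => // k IH; exact: lt2_step. Qed.

Lemma per_k a b (s : position a b) T p :
  (forall t, T <= t -> Uiter (t + p) s = Uiter t s) ->
  forall k t, T <= t -> Uiter (t + k * p) s = Uiter t s.
Proof.
move=> H; elim=> [|k IH] t Tt; first by rewrite mul0n addn0.
rewrite mulSn (_ : t + (p + k * p) = (t + k * p) + p); last ssrlia.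
by rewrite H ?IH //; ssrlia.
Qed.

Lemma per_dvd a b (s : position a b) p q :
  period_of s p -> is_eventual_period s q -> p %| q.
Proof.
move=> [[p0 [T HT]] pmin] [q0 [T' HT']].
apply/dvdnP; exists (q %/ p).
case r0: (q %% p) => [|r]; first by rewrite {1}(divn_eq q p) r0 addn0.
have : p <= q %% p.
  apply: pmin; split; first by rewrite r0.
  exists (maxn T T') => t; rewrite geq_max => /andP [tT tT'].
  rewrite -{1}(per_k HT (q %/ p)); last by ssrlia.
  by rewrite -addnA addnC (addnC (q %% p)) -divn_eq addnC HT'.
by rewrite leqNgt ltn_pmod.
Qed.

Lemma chain_eq (F : nat -> nat) p : (forall j, j < p -> F j.+1 <= F j) -> F p = F 0 ->
  forall i, i < p -> F i.+1 = F i.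
Proof.
move=> H e.
have M : forall i d, i + d <= p -> F (i + d) <= F i.
  move=> i; elim=> [|d IH] le; first by rewrite addn0.
  rewrite addnS; apply: leq_trans (IH _); last by ssrlia.
  by apply: H; ssrlia.
move=> i ip.
have h1 := M 0 i.+1 ip; rewrite add0n in h1; have h2 := M i.+1 (p - i.+1); rewrite subnKC // in h2.
have h3 := H i ip; rewrite e in h2; have h2' := h2 (leqnn p).
have h4 := M 0 i (ltnW ip); rewrite add0n in h4; ssrlia.
Qed.

Lemma fire_const a b (s : position a b) T p x :
  (forall i, i < p -> fires (Uiter (i + T) s) x) ->
  Uiter (p + T) s x = Uiter T s x ->
  forall i, i < p -> inc (Uiter (i + T) s) x = Kdeg x.
Proof.
move=> Hf e.
have E : forall i, i < p -> Uiter (i.+1 + T) s x =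
   Uiter (i + T) s x - Kdeg x + inc (Uiter (i + T) s) x.
  by move=> i ip; rewrite addSn /= stepE (Hf i ip).
have := chain_eq (F := fun i => Uiter (i + T) s x) (p := p).
move=> /(_ _ e) H i ip.
have le := inc_le (Uiter (i + T) s) x.
have fi := Hf i ip; rewrite /fires in fi.
have := E i ip; rewrite H //.
- move=> e2; ssrlia.
- move=> j jp; rewrite E //; have hh := inc_le (Uiter (j + T) s) x.
  have fj := Hf j jp; rewrite /fires in fj; ssrlia.
Qed.

Lemma caseA a b (ha : 0 < a) (hb : 0 < b) (s : position a b) T p (p0 : 0 < p)
  (HT : forall t, T <= t -> Uiter (t + p) s = Uiter t s) v
  (hv : 2 * Kdeg v <= Uiter T s v) : is_eventual_period s 1.
Proof.
have eTp : Uiter (p + T) s = Uiter T s by rewrite addnC HT.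
have hb2 : forall i, i <= p -> 2 * Kdeg v <= Uiter (i + T) s v.
  move=> i ip; rewrite leqNgt; apply/negP => lt.
  have := lt2_stays (p - i) lt; rewrite addnA subnK // eTp.
  by rewrite ltnNge hv.
have fv : forall i, i < p -> fires (Uiter (i + T) s) v.
  move=> i ip; rewrite /fires; apply: leq_trans (hb2 i (ltnW ip)); ssrlia.
have nv := fire_const fv (congr1 (fun f => f v) eTp).
set w : Kvert a b := match v with inl _ => inr (Ordinal hb) | inr _ => inl (Ordinal ha) end.
have vw : Kadj v w by rewrite /w; case: v {hv hb2 fv nv w}.
have fw : forall i, i < p -> fires (Uiter (i + T) s) w.
  by move=> i ip; apply: (inc_full (nv i ip)).
have nw := fire_const fw (congr1 (fun f => f w) eTp).
have all : forall x, fires (Uiter T s) x.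
  move=> x.
  have [vx | vx] := boolP (Kadj v x).
    by apply: (inc_full (nv 0 p0)).
  apply: (inc_full (nw 0 p0)).
  by move: vx; rewrite /w; case: v {hv hb2 fv nv w vw fw nw}; case: x.
have fix1 : step (Uiter T s) = Uiter T s.
  apply: functional_extensionality => x.
  rewrite stepE all (inc_all (fun u _ => all u)).
  have := all x; rewrite /fires => h; ssrlia.
have fixk : forall k, Uiter (k + T) s = Uiter T s.
  elim=> // k IH; by rewrite addSn /= -/(Uiter (k + T) s) IH.
split => //; exists T => t Tt.
rewrite -(subnK Tt) addn1 (_ : (t - T + T).+1 = (t - T).+1 + T) //.
by rewrite !fixk.
Qed.

Lemma card_inr a b (P : pred 'I_b) :
  #|[pred u : Kvert a b | if u is inr j then P j else false]| = #|P|.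
Proof.
have inj : injective (@inr 'I_a 'I_b) by move=> x y [].
rewrite -(card_image inj P); apply: eq_card => u; rewrite inE.
case: u => [i|j]; last by rewrite mem_image.
by apply/esym/imageP => [[x _]].
Qed.

Lemma card_inl a b (P : pred 'I_a) :
  #|[pred u : Kvert a b | if u is inl i then P i else false]| = #|P|.
Proof.
have inj : injective (@inl 'I_a 'I_b) by move=> x y [].
rewrite -(card_image inj P); apply: eq_card => u; rewrite inE.
case: u => [i|j]; first by rewrite mem_image.
by apply/esym/imageP => [[x _]].
Qed.

Lemma KdegL a b (i : 'I_a) : Kdeg (inl i : Kvert a b) = b.
Proof.
transitivity #|'I_b|; last exact: card_ord.
rewrite /Kdeg -(@card_inr a b 'I_b); apply: eq_card => u.
by rewrite !inE; case: u.
Qed.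

Lemma KdegR a b (j : 'I_b) : Kdeg (inr j : Kvert a b) = a.
Proof.
transitivity #|'I_a|; last exact: card_ord.
rewrite /Kdeg -(@card_inl a b 'I_a); apply: eq_card => u.
by rewrite !inE; case: u.
Qed.

Lemma incL a b (s : position a b) i :
  inc s (inl i) = #|[pred j : 'I_b | a <= s (inr j)]|.
Proof.
rewrite /inc -(@card_inr a b); apply: eq_card => u.
by rewrite !inE; case: u => //= j; rewrite /fires KdegR.
Qed.

Lemma incR a b (s : position a b) j :
  inc s (inr j) = #|[pred i : 'I_a | b <= s (inl i)]|.
Proof.
rewrite /inc -(@card_inl a b); apply: eq_card => u.
by rewrite !inE; case: u => //= i; rewrite /fires KdegL.
Qed.

Lemma card_sum n (P : pred 'I_n) : #|[pred i | P i]| = \sum_(i < n) (P i : nat).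
Proof.
rewrite -sum1_card big_mkcond; apply: eq_bigr => i _; rewrite inE.
by case: (P i).
Qed.

Lemma subif_mod x d : x < 2 * d -> x - (if d <= x then d else 0) = x %% d.
Proof.
move=> lt; case: leqP => h; last by rewrite subn0 modn_small.
rewrite -{2}(subnK h) modnDr modn_small //; ssrlia.
Qed.

Lemma div_small2 x d : x < 2 * d -> x %/ d = (d <= x).
Proof.
move=> lt; case: leqP => h; last by rewrite divn_small.
have d0 : 0 < d by ssrlia.
rewrite (_ : x = 1 * d + (x - d)); last by ssrlia.
rewrite divnMDl // divn_small //; ssrlia.
Qed.

Lemma div_step x r d : 0 < d -> r <= d -> (x + r) %/ d = x %/ d + (d <= x %% d + r).
Proof.
move=> d0 rd; rewrite {1}(divn_eq x d) -addnA divnMDl // (@div_small2 (x %% d + r)) //.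
have HH := ltn_pmod x d0; ssrlia.
Qed.

Lemma sum_const1 n : \sum_(i < n) 1 = n.
Proof. by rewrite big_const_ord iter_addn_0 mul1n. Qed.

Lemma mainB a b (ha : 0 < a) (hb : 0 < b) (u : nat -> position a b)
  (hu : forall t, u t.+1 = step (u t)) (h0 : forall x, u 0 x < 2 * Kdeg x) :
  (exists m N, 0 < m <= b /\ forall t, N <= t -> u (t + 2 * m) = u t) /\
  (exists m N, 0 < m <= a /\ forall t, N <= t -> u (t + 2 * m) = u t).
Proof.
set R := fun t => #|[pred j : 'I_b | a <= u t (inr j)]|.
set L := fun t => #|[pred i : 'I_a | b <= u t (inl i)]|.
have uL : forall t i, u t.+1 (inl i) = u t (inl i) - (if b <= u t (inl i) then b else 0) + R t.
  by move=> t i; rewrite hu stepE /fires KdegL incL.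
have uR : forall t j, u t.+1 (inr j) = u t (inr j) - (if a <= u t (inr j) then a else 0) + L t.
  by move=> t j; rewrite hu stepE /fires KdegR incR.
have Rb : forall t, R t <= b by move=> t; rewrite /R; apply: leq_trans (max_card _) _; rewrite card_ord.
have La : forall t, L t <= a by move=> t; rewrite /L; apply: leq_trans (max_card _) _; rewrite card_ord.
have lt2 : forall t x, u t x < 2 * Kdeg x.
  by elim=> [|t IH] x //; rewrite hu; apply: lt2_step.
have lt2L : forall t i, u t (inl i) < 2 * b by move=> t i; have := lt2 t (inl i); rewrite KdegL.
have lt2R : forall t j, u t (inr j) < 2 * a by move=> t j; have := lt2 t (inr j); rewrite KdegR.
set C := fun t => \sum_(k < t) R k.
set D := fun t => \sum_(k < t) L k.
have CS : forall t, C t.+1 = C t + R t by move=> t; rewrite /C big_ord_recr.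
have DS : forall t, D t.+1 = D t + L t by move=> t; rewrite /D big_ord_recr.
have C0 : C 0 = 0 by rewrite /C big_ord0.
have D0 : D 0 = 0 by rewrite /D big_ord0.
have modL : forall t i, u t (inl i) %% b = (u 0 (inl i) + C t) %% b.
  elim=> [|t IH] i; first by rewrite C0 addn0.
  by rewrite uL subif_mod // IH modnDml CS addnA.
have modR : forall t j, u t (inr j) %% a = (u 0 (inr j) + D t) %% a.
  elim=> [|t IH] j; first by rewrite D0 addn0.
  by rewrite uR subif_mod // IH modnDml DS addnA.
have formL : forall t i, u t.+1 (inl i) = (u 0 (inl i) + C t) %% b + R t.
  by move=> t i; rewrite uL subif_mod // modL.
have formR : forall t j, u t.+1 (inr j) = (u 0 (inr j) + D t) %% a + L t.
  by move=> t j; rewrite uR subif_mod // modR.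
set f := fun x => \sum_(i < a) (u 0 (inl i) + x) %/ b.
set g := fun y => \sum_(j < b) (u 0 (inr j) + y) %/ a.
have eD : forall t, D t.+1 = f (C t).
  elim=> [|t IH].
    rewrite DS D0 add0n C0 /L /f card_sum; apply: eq_bigr => i _.
    by rewrite addn0 div_small2.
  rewrite DS IH CS /f /L card_sum -big_split /=; apply: eq_bigr => i _.
  by rewrite addnA (div_step (u 0 (inl i) + C t)) // formL.
have eC : forall t, C t.+1 = g (D t).
  elim=> [|t IH].
    rewrite CS C0 add0n D0 /R /g card_sum; apply: eq_bigr => j _.
    by rewrite addn0 div_small2.
  rewrite CS IH DS /g /R card_sum -big_split /=; apply: eq_bigr => j _.
  by rewrite addnA (div_step (u 0 (inr j) + D t)) // formR.
have Cinc : forall t, C t <= C t.+1 by move=> t; rewrite CS leq_addr.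
have Dinc : forall t, D t <= D t.+1 by move=> t; rewrite DS leq_addr.
have fm : forall x y, x <= y -> f x <= f y.
  by move=> x y le; apply: leq_sum => i _; apply: leq_div2r; rewrite leq_add2l.
have gm : forall x y, x <= y -> g x <= g y.
  by move=> x y le; apply: leq_sum => i _; apply: leq_div2r; rewrite leq_add2l.
have ftr : forall x, f (x + b) = f x + a.
  move=> x; rewrite /f; transitivity (\sum_(i < a) ((u 0 (inl i) + x) %/ b + 1)).
    2: by rewrite big_split /= sum_const1.
  apply: eq_bigr => i _ /=.
  by rewrite addnA -{2}(mul1n b) addnC divnMDl // addnC.
have gtr : forall y, g (y + a) = g y + b.
  move=> y; rewrite /g; transitivity (\sum_(i < b) ((u 0 (inr i) + y) %/ a + 1)).
    2: by rewrite big_split /= sum_const1.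
  apply: eq_bigr => i _ /=.
  by rewrite addnA -{2}(mul1n a) addnC divnMDl // addnC.
have per : forall m J N, (forall t, N <= t -> C (t + 2 * m) = C t + J * b /\
      D (t + 2 * m) = D t + J * a) -> forall t, N.+1 <= t -> u (t + 2 * m) = u t.
  move=> m J N H [|t] // Nt; apply: functional_extensionality => x.
  have [H1 H2] := H t Nt; have [H3 H4] := H t.+1 (ltnW Nt).
  rewrite addSn; case: x => [i|j].
  - rewrite !formL H1 [_ + J * b]addnC addnCA modnMDl; congr (_ + _).
    have e1 := CS (t + 2 * m); have e2 := CS t; rewrite -addSn H3 e2 in e1; ssrlia.
  - rewrite !formR H2 [_ + J * a]addnC addnCA modnMDl; congr (_ + _).
    have e1 := DS (t + 2 * m); have e2 := DS t; rewrite -addSn H4 e2 in e1; ssrlia.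
split.
- have [m [J [N [mb H]]]] := chains ha hb fm gm ftr gtr eC eD Cinc.
  by exists m, N.+1; split => //; apply: per H.
- have [m [J [N [ma H]]]] := chains hb ha gm fm gtr ftr eD eC Dinc.
  exists m, N.+1; split => //; apply: (per m J N) => t Nt.
  by have [-> ->] := H t Nt.
Qed.

Theorem corollary3p6 (a b : nat) (ha : 1 <= a) (hb : 1 <= b)
  (s : position a b) (p : nat) :
  period_of s p ->
  (odd p -> p <= minn a b) /\ (~~ odd p -> p <= 2 * minn a b).
Proof.
move=> P; have [[p0 [T HT]] _] := P.
have m2min : forall x y, 2 * minn x y = minn (2 * x) (2 * y).
  by move=> x y; rewrite /minn ltn_mul2l /=; case: ifP.
case: (boolP [forall x, Uiter T s x < 2 * Kdeg x]) => [/forallP h0 | /forallPn [x]].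
- set u := fun t => Uiter (T + t) s.
  have hu : forall t, u t.+1 = step (u t) by move=> t; rewrite /u addnS.
  have h0' : forall x, u 0 x < 2 * Kdeg x by move=> x; rewrite /u addn0.
  have [[m1 [N1 [/andP [m10 m1b] H1]]] [m2 [N2 [/andP [m20 m2a] H2]]]] := mainB ha hb hu h0'.
  have E : forall m N, 0 < m -> (forall t, N <= t -> u (t + 2 * m) = u t) ->
      p %| 2 * m.
    move=> m N m0 H; apply: (per_dvd P); split; first by rewrite muln_gt0.
    exists (T + N) => t le; have := H (t - T); rewrite /u.
    rewrite addnA subnKC; last by ssrlia.
    by apply; ssrlia.
  have d1 := E _ _ m10 H1; have d2 := E _ _ m20 H2.
  split => [op | ep].
  + rewrite -coprimen2 in op; rewrite (Gauss_dvdr _ op) in d1; rewrite (Gauss_dvdr _ op) in d2.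
    rewrite leq_min; apply/andP; split.
      exact: leq_trans (dvdn_leq m20 d2) m2a.
    exact: leq_trans (dvdn_leq m10 d1) m1b.
  + rewrite m2min leq_min; apply/andP; split.
      apply: leq_trans (dvdn_leq _ d2) (leq_mul (leqnn 2) m2a); by rewrite muln_gt0.
    apply: leq_trans (dvdn_leq _ d1) (leq_mul (leqnn 2) m1b); by rewrite muln_gt0.
- rewrite -leqNgt => hx.
  have d := per_dvd P (caseA ha hb p0 HT hx).
  have p1 := dvdn_leq (isT : 0 < 1) d.
  split => _.
  + rewrite leq_min; apply/andP; split; exact: leq_trans p1 _.
  + rewrite m2min leq_min; apply/andP; split; apply: leq_trans p1 _; by rewrite muln_gt0.
Qed.
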